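(* Let $\mathcal{A}$ be a finite alphabet and $\mathbf{p}$ an irreducible pair on $\mathcal{A}$. (1) If $\mathbf{q}$ is in the labeled extended Rauzy class of $\mathbf{p}$, then the quadratic forms $\mathcal{Q}_{\mathbf{p}}$ and $\mathcal{Q}_{\mathbf{q}}$ are equivalent. (2) If $\mathbf{q}=(q_0,q_1)$ is a pair on an alphabet $\mathcal{A}'$ such that the permutation $q_1\circ q_0^{-1}$ lies in the non-labeled extended Rauzy class of $\mathbf{p}$, then $\mathcal{Q}_{\mathbf{p}}$ and $\mathcal{Q}_{\mathbf{q}}$ are equivalent.
   Context: Let $n=\#\mathcal{A}$. A pair is $\mathbf{p}=(p_0,p_1)$ with $p_0,p_1:\mathcal{A}\to\{1,\dots,n\}$ bijections. Irreducible: $p_0^{-1}\{1,\dots,k\}\ne p_1^{-1}\{1,\dots,k\}$ for $1\le k<n$. Rauzy move of type $\varepsilon$: $\varepsilon\mathbf{p}=(p'_0,p'_1)$, $p'_\varepsilon=p_\varepsilon$, and for $z=p_\varepsilon^{-1}(n)$, $p'_{1-\varepsilon}(b)=p_{1-\varepsilon}(b)$ if $p_{1-\varepsilon}(b)\le p_{1-\varepsilon}(z)$, $=p_{1-\varepsilon}(b)+1$ if $p_{1-\varepsilon}(z)<p_{1-\varepsilon}(b)<n$, $=p_{1-\varepsilon}(z)+1$ if $p_{1-\varepsilon}(b)=n$. Left Rauzy move of type $\varepsilon$: $\tilde\varepsilon\mathbf{p}=(p'_0,p'_1)$, $p'_\varepsilon=p_\varepsilon$, and for $a=p_\varepsilon^{-1}(1)$,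 $p'_{1-\varepsilon}(b)=p_{1-\varepsilon}(a)-1$ if $p_{1-\varepsilon}(b)=1$, $=p_{1-\varepsilon}(b)-1$ if $1<p_{1-\varepsilon}(b)<p_{1-\varepsilon}(a)$, unchanged otherwise. The labeled extended Rauzy class of $\mathbf{p}$ is the set of pairs reachable from $\mathbf{p}$ by Rauzy and left Rauzy moves of both types; the non-labeled extended Rauzy class is its image under $(p_0,p_1)\mapsto p_1\circ p_0^{-1}\in\mathfrak{S}_n$. The canonical quadratic form of $\mathbf{p}$ is $\mathcal{Q}_{\mathbf{p}}:\mathbb{Z}_2^{\mathcal{A}}\to\mathbb{Z}_2$, $\mathcal{Q}_{\mathbf{p}}(v)=\sum_{a\in\mathcal{A}}v_a^2+\sum_{\{a,b\}}L_{\mathbf{p}}(a,b)v_av_b \pmod 2$, the second sum over unordered pairs of distinct letters, where $L_{\mathbf{p}}(a,b)=1$ if $(p_0(a)-p_0(b))(p_1(a)-p_1(b))<0$ and $0$ otherwise. Quadratic forms $\mathcal{Q}:\mathbb{Z}_2^{\mathcal{A}}\to\mathbb{Z}_2$ and $\mathcal{Q}':\mathbb{Z}_2^{\mathcal{A}'}\to\mathbb{Z}_2$ are equivalent if there is an invertible linear map $A:\mathbb{Z}_2^{\mathcal{A}}\to\mathbb{Z}_2^{\mathcal{A}'}$ with $\mathcal{Q}'\circ A=\mathcal{Q}$. *)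

(* Defs.v *)
From mathcomp Require Import all_boot all_algebra.
Set Implicit Arguments. Unset Strict Implicit. Unset Printing Implicit Defensive.
Import GRing.Theory Num.Theory.

(* A pair on alphabet A: p false = p_0, p true = p_1, each A -> nat
   (values intended in {1,...,#|A|}).  The type eps is bool, 1-eps = ~~eps. *)
Definition pairT (A : finType) := bool -> A -> nat.

Definition is_pair (A : finType) (p : pairT A) : Prop :=
  forall e : bool,
    injective (p e) /\ (forall a, 1 <= p e a <= #|A|) /\
    (forall k, 1 <= k <= #|A| -> exists a, p e a = k).

Definition irreducible (A : finType) (p : pairT A) : Prop :=
  forall k, 1 <= k < #|A| ->
    [set a | p false a <= k] != [set a | p true a <= k].

Definition rauzy_move (A : finType) (e : bool) (p q : pairT A) : Prop :=
  exists z, p e z = #|A| /\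
    (forall b, q e b = p e b) /\
    (forall b, q (~~ e) b =
       if p (~~ e) b <= p (~~ e) z then p (~~ e) b
       else if p (~~ e) b < #|A| then (p (~~ e) b).+1
       else (p (~~ e) z).+1).

Definition left_rauzy_move (A : finType) (e : bool) (p q : pairT A) : Prop :=
  exists a, p e a = 1 /\
    (forall b, q e b = p e b) /\
    (forall b, q (~~ e) b =
       if p (~~ e) b == 1 then p (~~ e) a - 1
       else if 1 < p (~~ e) b < p (~~ e) a then p (~~ e) b - 1
       else p (~~ e) b).

Definition ext_move (A : finType) (p q : pairT A) : Prop :=
  exists e, rauzy_move e p q \/ left_rauzy_move e p q.

Inductive in_labeled_class (A : finType) (p : pairT A) : pairT A -> Prop :=
  | lc_refl : in_labeled_class p p
  | lc_step q r : in_labeled_class p q -> ext_move q r -> in_labeled_class p r.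

(* the permutation p_1 o p_0^{-1} of {1,...,n}, as a function on nat
   (value 0 outside the range) *)
Definition perm_of (A : finType) (p : pairT A) (k : nat) : nat :=
  if [pick a | p false a == k] is Some a then p true a else 0.

(* the permutation sigma (of {1..#|A'|}) lies in the non-labeled extended
   Rauzy class of p: it is the image of some pair of the labeled class. *)
Definition in_nonlabeled_class (A : finType) (p : pairT A)
    (n : nat) (sigma : nat -> nat) : Prop :=
  exists p', in_labeled_class p p' /\ n = #|A| /\
    (forall k, 1 <= k <= n -> perm_of p' k = sigma k).

Definition Lp (A : finType) (p : pairT A) (a b : A) : bool :=
  ((Posz (p false a) - Posz (p false b)) * (Posz (p true a) - Posz (p true b)) < 0)%R.

(* canonical quadratic form; unordered pairs {a,b} enumerated once via enum_rank *)
Definition Qform (A : finType) (p : pairT A) (v : {ffun A -> 'F_2}) : 'F_2 :=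
  (\sum_(a : A) v a ^+ 2 +
   \sum_(a : A) \sum_(b : A | (enum_rank a < enum_rank b)%N)
      (Lp p a b)%:R * v a * v b)%R.

Local Open Scope ring_scope.
Definition qf_equiv (A A' : finType) (Q : {ffun A -> 'F_2} -> 'F_2)
    (Q' : {ffun A' -> 'F_2} -> 'F_2) : Prop :=
  exists f : {ffun A -> 'F_2} -> {ffun A' -> 'F_2},
    (forall (c : 'F_2) (u v : {ffun A -> 'F_2}),
        f [ffun a => c * u a + v a] = [ffun a' => c * f u a' + f v a']) /\
    bijective f /\ (forall v, Q' (f v) = Q v).

(* Main.v *)
Require Import Defs.
From mathcomp Require Import all_boot all_algebra zify ring.
Set Implicit Arguments. Unset Strict Implicit. Unset Printing Implicit Defensive.
Import GRing.Theory.
Local Open Scope ring_scope.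

Lemma two0 : (2%:R : 'F_2) = 0. Proof. by apply: val_inj. Qed.
Lemma addxx2 (x : 'F_2) : x + x = 0.
Proof. by rewrite -mulr2n -mulr_natr two0 mulr0. Qed.
Lemma natr_addb (b1 b2 : bool) : ((b1 (+) b2)%:R : 'F_2) = b1%:R + b2%:R.
Proof. by case: b1; case: b2; rewrite ?addr0 ?add0r // addxx2. Qed.

Section QL.
Variable A : finType.

Definition QL (L : A -> A -> bool) (v : {ffun A -> 'F_2}) : 'F_2 :=
  \sum_(a : A) v a ^+ 2 +
   \sum_(a : A) \sum_(b : A | (enum_rank a < enum_rank b)%N)
      (L a b)%:R * v a * v b.

Definition GL (L : A -> A -> bool) a b : 'F_2 :=
  ((enum_rank a < enum_rank b)%N)%:R * (L a b)%:R.

Lemma QL_G L v : QL L v = \sum_a v a ^+ 2 + \sum_a \sum_b GL L a b * v a * v b.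
Proof.
congr (_ + _); apply: eq_bigr => a _; rewrite big_mkcond; apply: eq_bigr => b _.
by rewrite /GL; case: ifP; rewrite ?mul1r ?mul0r.
Qed.

Lemma sum_delta (z : A) (F : A -> 'F_2) : \sum_a (a == z)%:R * F a = F z.
Proof.
rewrite (bigD1 z) //= eqxx mul1r big1 ?addr0 // => a /negbTE ->.
by rewrite mul0r.
Qed.

Definition shift (v : {ffun A -> 'F_2}) z t := [ffun a => v a + (a == z)%:R * t].

Lemma QL_shift L (Ls : forall a b, L a b = L b a) (L0 : forall a, L a a = false)
   v z t :
  QL L (shift v z t) = QL L v + t ^+ 2 + t * \sum_b (L z b)%:R * v b.
Proof.
rewrite !QL_G.
have e1 : \sum_a shift v z t a ^+ 2 = \sum_a v a ^+ 2 + t ^+ 2.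
  transitivity (\sum_a (v a ^+ 2 + (a == z)%:R * t ^+ 2)).
    apply: eq_bigr => a _; rewrite ffunE.
    have -> : (v a + (a == z)%:R * t) ^+ 2 = v a ^+ 2 + ((a==z)%:R)^+2 * t ^+ 2
       + 2%:R * (v a * ((a==z)%:R * t)) by ring.
    by rewrite two0 mul0r addr0 -natrX; case: (a == z).
  by rewrite big_split /= sum_delta.
have e2 : \sum_a \sum_b GL L a b * shift v z t a * shift v z t b =
   \sum_a \sum_b GL L a b * v a * v b +
   \sum_a \sum_b (b == z)%:R * (t * GL L a b * v a) +
   \sum_a \sum_b (a == z)%:R * (t * GL L a b * v b) +
   \sum_a \sum_b (a == z)%:R * ((b == z)%:R * (t ^+ 2 * GL L a b)).
  rewrite -!big_split /=; apply: eq_bigr => a _.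
  rewrite -!big_split /=; apply: eq_bigr => b _.
  rewrite !ffunE.
  by case: (a == z); case: (b == z); rewrite /=; ring.
rewrite e1 e2.
under [in X in _ + (_ + X + _ + _)]eq_bigr => a _ do rewrite sum_delta.
under [in X in _ + (_ + _ + X + _)]eq_bigr => a _ do rewrite -mulr_sumr.
rewrite (sum_delta z (fun a => \sum_i t * GL L a i * v i)).
under [in X in _ + (_ + _ + _ + X)]eq_bigr => a _ do rewrite -mulr_sumr.
rewrite (sum_delta z (fun a => \sum_b (b == z)%:R * (t ^+ 2 * GL L a b))) /=.
rewrite sum_delta /GL ltnn mul0r mulr0 addr0.
set S1 := \sum_a v a ^+ 2; set S2 := \sum_a \sum_b _.
have key : \sum_a t * ((enum_rank a < enum_rank z)%:R * (L a z)%:R) * v a +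
  \sum_i t * ((enum_rank z < enum_rank i)%:R * (L z i)%:R) * v i =
  t * \sum_b (L z b)%:R * v b.
  rewrite mulr_sumr -big_split /=; apply: eq_bigr => b _.
case: (ltngtP (enum_rank b) (enum_rank z)) => h.
- by rewrite /= Ls; ring.
- by rewrite /= Ls; ring.
- have eb : b = z by apply: enum_rank_inj; apply: val_inj.
  by rewrite eb L0 /= !(mulr0, mul0r) addr0.
rewrite -key; ring.
Qed.

Lemma QL_off L L' w (H1 : forall a b, a != w -> b != w -> L' a b = L a b)
  (v : {ffun A -> 'F_2}) (vw : v w = 0) : QL L' v = QL L v.
Proof.
rewrite /QL; congr (_ + _); apply: eq_bigr => a _; apply: eq_bigr => b _.
case: (eqVneq a w) => [->|aw]; first by rewrite vw !(mulr0, mul0r).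
case: (eqVneq b w) => [->|bw]; first by rewrite vw !(mulr0, mul0r).
by rewrite H1.
Qed.

Lemma QL_move L L' (Ls : forall a b, L a b = L b a) (L0 : forall a, L a a = false)
  (Ls' : forall a b, L' a b = L' b a) (L0' : forall a, L' a a = false)
  z w (zw : z != w)
  (H1 : forall a b, a != w -> b != w -> L' a b = L a b)
  (H2 : L' w z = true)
  (H3 : forall b, b != w -> L' z b (+) L' w b (+) L w b = false) (v : {ffun A -> 'F_2}) :
  QL L' (shift v z (v w)) = QL L v.
Proof.
set t := v w; set v0 := shift v w t.
have v0w : v0 w = 0 by rewrite ffunE eqxx mul1r addxx2.
have ev : v = shift v0 w t.
  apply/ffunP => a; rewrite !ffunE -addrA.
  by case: (a == w); rewrite /= ?mul1r ?mul0r ?addxx2 ?addr0.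
have ef : shift v z t = shift (shift v0 z t) w t.
  apply/ffunP => a; rewrite !ffunE.
  case: (a == w); case: (a == z); rewrite /= ?mul1r ?mul0r ?addr0;
  by rewrite -?addrA ?addxx2 ?addr0 // addrC -addrA addxx2 addr0.
rewrite ef [in RHS]ev; clearbody v0 t; rewrite !QL_shift // (QL_off H1 v0w).
have e3 : \sum_b (L' w b)%:R * shift v0 z t b =
          \sum_b (L' w b)%:R * v0 b + t.
  transitivity (\sum_b ((L' w b)%:R * v0 b + (b == z)%:R * ((L' w b)%:R * t))).
    by apply: eq_bigr => b _; rewrite ffunE; ring.
  by rewrite big_split /= sum_delta H2 mul1r.
rewrite e3.
have key : \sum_b (L' z b)%:R * v0 b + \sum_b (L' w b)%:R * v0 b +
           \sum_b (L w b)%:R * v0 b = 0.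
  rewrite -!big_split /= big1 // => b _.
  case: (eqVneq b w) => [->|bw]; first by rewrite v0w !mulr0 !addr0.
  by rewrite -!mulrDl -!natr_addb H3 // mul0r.
apply: subr0_eq.
set K := \sum_b _ + _ + _ in key.
set C := \sum_b (L w b)%:R * v0 b.
set A1 := \sum_b (L' z b)%:R * v0 b.
set B1 := \sum_b (L' w b)%:R * v0 b.
have -> : QL L v0 + t ^+ 2 + t * A1 + t ^+ 2 + t * (B1 + t) -
    (QL L v0 + t ^+ 2 + t * C) = t * K + 2%:R * (t ^+ 2 - t * C).
  rewrite /K -/A1 -/B1 -/C; ring.
by rewrite key two0 mulr0 mul0r addr0.
Qed.

End QL.

Definition fmove (A : finType) (z w : A) (v : {ffun A -> 'F_2}) := shift v z (v w).

Lemma qf_refl (A : finType) (Q : {ffun A -> 'F_2} -> 'F_2) : qf_equiv Q Q.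
Proof.
exists id; split; last split => //; last by exists id.
by move=> c u v; apply/ffunP => a; rewrite !ffunE.
Qed.

Lemma qf_eq (A : finType) (Q Q' : {ffun A -> 'F_2} -> 'F_2) :
  (forall v, Q v = Q' v) -> qf_equiv Q Q'.
Proof.
move=> h; exists id; split; last split => //; last by exists id.
by move=> c u v; apply/ffunP => a; rewrite !ffunE.
Qed.

Lemma qf_trans (A B C : finType) (Q1 : {ffun A -> 'F_2} -> 'F_2)
  (Q2 : {ffun B -> 'F_2} -> 'F_2) (Q3 : {ffun C -> 'F_2} -> 'F_2) :
  qf_equiv Q1 Q2 -> qf_equiv Q2 Q3 -> qf_equiv Q1 Q3.
Proof.
move=> [f [fl [fb fq]]] [g [gl [gb gq]]].
exists (g \o f); split; last split.
- by move=> c u v /=; rewrite fl gl.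
- exact: bij_comp.
- by move=> v /=; rewrite gq fq.
Qed.

Lemma qf_move (A : finType) (L L' : A -> A -> bool)
  (Ls : forall a b, L a b = L b a) (L0 : forall a, L a a = false)
  (Ls' : forall a b, L' a b = L' b a) (L0' : forall a, L' a a = false)
  z w (zw : z != w)
  (H1 : forall a b, a != w -> b != w -> L' a b = L a b)
  (H2 : L' w z = true)
  (H3 : forall b, b != w -> L' z b (+) L' w b (+) L w b = false) :
  qf_equiv (QL L) (QL L').
Proof.
exists (fmove z w); split; last split.
- by move=> c u v; apply/ffunP => a; rewrite !ffunE; ring.
- have inv : cancel (fmove z w) (fmove z w).
    move=> v; apply/ffunP => a; rewrite /fmove !ffunE.
    rewrite [w == z]eq_sym (negbTE zw) mul0r addr0 -addrA.
    by case: (a == z); rewrite /= ?mul1r ?mul0r ?addxx2 ?addr0.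
  by exists (fmove z w).
- by move=> v; apply: QL_move.
Qed.

Lemma LpE (A : finType) (p : pairT A) e a b :
  Lp p a b = ((p e a < p e b) && (p (~~ e) b < p (~~ e) a))%N ||
             ((p e b < p e a) && (p (~~ e) a < p (~~ e) b))%N.
Proof. rewrite /Lp; case: e => /=; nia. Qed.

Lemma Lp_sym (A : finType) (p : pairT A) a b : Lp p a b = Lp p b a.
Proof. rewrite !(LpE p false); lia. Qed.

Lemma Lp_refl (A : finType) (p : pairT A) a : Lp p a a = false.
Proof. rewrite (LpE p false); lia. Qed.

Lemma guard_sum (T : finType) (P : pred T) (F : T -> 'F_2) :
  \sum_(b | P b) F b = \sum_b (P b)%:R * F b.
Proof. rewrite big_mkcond; apply: eq_bigr => b _; by case: (P b); rewrite ?mul1r ?mul0r. Qed.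

Lemma sum_order (T : finType) (r1 r2 : T -> nat) (i1 : injective r1)
  (i2 : injective r2) (N : T -> T -> 'F_2) (Ns : forall a b, N a b = N b a) :
  \sum_a \sum_(b | (r1 a < r1 b)%N) N a b = \sum_a \sum_(b | (r2 a < r2 b)%N) N a b.
Proof.
under eq_bigr => a _ do rewrite guard_sum.
under [RHS]eq_bigr => a _ do rewrite guard_sum.
pose X a b : 'F_2 := ((r1 a < r1 b)%N)%:R * ((r2 a < r2 b)%N)%:R * N a b.
pose Y a b : 'F_2 := ((r1 a < r1 b)%N)%:R * ((r2 b < r2 a)%N)%:R * N a b.
have p1 : forall a b, ((r1 a < r1 b)%N)%:R * N a b = X a b + Y a b.
  move=> a b; rewrite /X /Y.
  case: (ltngtP (r2 a) (r2 b)) => h /=; try ring.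
  by rewrite (i2 _ _ h) ltnn /=; ring.
have p2 : forall a b, ((r2 a < r2 b)%N)%:R * N a b = X a b + Y b a.
  move=> a b; rewrite /X /Y Ns.
  case: (ltngtP (r1 a) (r1 b)) => h /=; try ring.
  by rewrite (i1 _ _ h) ltnn /=; ring.
under eq_bigr => a _ do under eq_bigr => b _ do rewrite p1.
under [RHS]eq_bigr => a _ do under eq_bigr => b _ do rewrite p2.
rewrite [LHS](eq_bigr (fun a => \sum_b X a b + \sum_b Y a b)); last by move=> a _; rewrite big_split.
rewrite [RHS](eq_bigr (fun a => \sum_b X a b + \sum_b Y b a)); last by move=> a _; rewrite big_split.
rewrite !big_split /=; congr (_ + _).
by rewrite exchange_big.
Qed.

Lemma qf_relabel (A A' : finType) (p : pairT A) (q : pairT A') (phi : A -> A')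
  (psi : A' -> A) (c1 : cancel phi psi) (c2 : cancel psi phi)
  (HL : forall a b, a != b -> Lp q (phi a) (phi b) = Lp p a b) :
  qf_equiv (Qform p) (Qform q).
Proof.
pose f (v : {ffun A -> 'F_2}) : {ffun A' -> 'F_2} := [ffun a' => v (psi a')].
pose g (u : {ffun A' -> 'F_2}) : {ffun A -> 'F_2} := [ffun a => u (phi a)].
exists f; split; last split.
- by move=> c u v; apply/ffunP => a; rewrite !ffunE.
- exists g => v; apply/ffunP => a; rewrite !ffunE ?c1 ?c2 //.
- move=> v; rewrite /Qform.
  have ipsi : injective psi by apply: can_inj c2.
  have bphi : {on [pred _ | true], bijective phi}.
    by apply: onW_bij; exists psi.
  rewrite (sum_order (r1 := fun b => nat_of_ord (enum_rank b))
            (r2 := fun b => nat_of_ord (enum_rank (psi b)))); first last.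
  + by move=> a b; rewrite Lp_sym; ring.
  + by move=> a b /val_inj /enum_rank_inj /ipsi.
  + by move=> a b /val_inj /enum_rank_inj.
  rewrite (reindex phi) //=; congr (_ + _).
    by apply: eq_bigr => a _; rewrite !ffunE c1.
  rewrite (reindex phi) //=; apply: eq_bigr => a _.
  rewrite (reindex phi) /=; last first.
    by apply: onW_bij; exists psi.
  apply: eq_big => [b|b _]; first by rewrite !c1.
  rewrite !ffunE !c1.
  case: (eqVneq a b) => [->|ab]; first by rewrite !Lp_refl.
  by rewrite HL.
Qed.

Close Scope ring_scope.

Definition inv (A : finType) (p : pairT A) :=
  is_pair p /\ forall e a, ~ (p e a = 1 /\ p (~~ e) a = 1) /\
                           ~ (p e a = #|A| /\ p (~~ e) a = #|A|).

Lemma neg_cases (e e' : bool) : e' = e \/ e' = ~~ e.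
Proof. by case: e; case: e'; auto. Qed.

Lemma inv_build (A : finType) (p r : pairT A) e :
  is_pair p -> (forall b, r e b = p e b) ->
  injective (r (~~ e)) -> (forall b, 1 <= r (~~ e) b <= #|A|) ->
  (forall k, 1 <= k <= #|A| -> exists b, r (~~ e) b = k) ->
  (forall a, ~ (r e a = 1 /\ r (~~ e) a = 1) /\
             ~ (r e a = #|A| /\ r (~~ e) a = #|A|)) -> inv r.
Proof.
move=> pp re ri rr rs rv; split.
  move=> e'; case: (neg_cases e e') => ->; last by [].
  have [pi [pr ps]] := pp e; split; last split.
  - by move=> x y; rewrite !re => /pi.
  - by move=> a; rewrite re.
  - by move=> k /ps [a ha]; exists a; rewrite re.
move=> e' a; case: (neg_cases e e') => ->; first exact: rv.
rewrite negbK; have [h1 h2] := rv a; split => -[x y]; [exact: h1 | exact: h2].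
Qed.

Lemma inv_init (A : finType) (p : pairT A) :
  1 < #|A| -> is_pair p -> irreducible p -> inv p.
Proof.
move=> n2 pp ir; split => // e a.
have key : forall k, 1 <= k < #|A| -> p e a = k.+1 -> p (~~ e) a = k.+1 ->
   (forall b, p e b <= k.+1) -> (forall b, p (~~ e) b <= k.+1) -> False.
  move=> k hk he ho hbe hbo.
  have := ir k hk; apply/negP; rewrite negbK; apply/eqP/setP => b; rewrite !inE.
  have h : forall e', p e' a = k.+1 -> (forall b, p e' b <= k.+1) ->
      (p e' b <= k) = (b != a).
    move=> e' ha hb; have [pi _] := pp e'.
    case: (eqVneq b a) => [->|ba]; first by rewrite ha ltnn.
    have : p e' b != p e' a by apply: contra ba => /eqP /pi ->.
    by rewrite ha; have := hb b; lia.
  case: e he ho hbe hbo => /= he ho hbe hbo; first by rewrite (h _ he hbe) (h _ ho hbo).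
  by rewrite (h _ he hbe) (h _ ho hbo).
have [_ [re _]] := pp e; have [_ [ro _]] := pp (~~ e).
split => -[he ho].
- clear key re ro; have := ir 1; rewrite n2 => /(_ isT); apply/negP; rewrite negbK.
  apply/eqP/setP => b; rewrite !inE.
  have h : forall e', p e' a = 1 -> (p e' b <= 1) = (b == a).
    move=> e' ha; have [pi [pr _]] := pp e'.
    case: (eqVneq b a) => [->|ba]; first by rewrite ha.
    have : p e' b != p e' a by apply: contra ba => /eqP /pi ->.
    by rewrite ha; have := pr b; lia.
  by case: e he ho => /= he ho; rewrite (h _ he) (h _ ho).
- apply: (key #|A|.-1); rewrite ?prednK //; try lia.
  + move=> b; have := re b; lia.
  + move=> b; have := ro b; lia.
Qed.

Lemma rauzy_step (A : finType) (p r : pairT A) e :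
  inv p -> rauzy_move e p r -> inv r /\ qf_equiv (Qform p) (Qform r).
Proof.
move=> [pp pinv] [z [hz [re ro]]].
have [injP [rngP surP]] := pp e; have [injR [rngR surR]] := pp (~~ e).
have n1 : 1 <= #|A| by have := rngP z; lia.
have [w hw] : exists w, p (~~ e) w = #|A| by apply: surR; lia.
have zw : z != w.
  apply/eqP => ezw; rewrite -ezw in hw; have [_ h] := pinv e z; exact: h.
have dP : forall b c, b != c -> p e b != p e c.
  by move=> b c; apply: contra => /eqP /injP ->.
have dR : forall b c, b != c -> p (~~ e) b != p (~~ e) c.
  by move=> b c; apply: contra => /eqP /injR ->.
have Pz : forall b, b != z -> p e b < #|A|.
  by move=> b /dP; rewrite hz; have := rngP b; lia.
have Rw : forall b, b != w -> p (~~ e) b < #|A|.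
  by move=> b /dR; rewrite hw; have := rngR b; lia.
have Rzn := Rw z zw.
have gR : forall b,
   (p (~~ e) b <= p (~~ e) z /\ r (~~ e) b = p (~~ e) b) \/
   (p (~~ e) z < p (~~ e) b < #|A| /\ r (~~ e) b = (p (~~ e) b).+1) \/
   (p (~~ e) b = #|A| /\ r (~~ e) b = (p (~~ e) z).+1).
  move=> b; rewrite ro; have := rngR b; case: ifP => h1; first by left.
  by case: ifP => h2 hb; right; [left|right]; lia.
have rz := rngR z.
split.
  apply: (inv_build pp re).
  - move=> b c h; apply: injR; have := gR b; have := gR c; have := rngR b; have := rngR c; lia.
  - move=> b; have := gR b; have := rngR b; lia.
  - move=> k hk.
    case: (leqP k (p (~~ e) z)) => h1.
      have [b hb] := surR k (ltac:(lia)); exists b; have := gR b; lia.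
    case: (eqVneq k (p (~~ e) z).+1) => h2.
      by exists w; have := gR w; lia.
    have [b hb] := surR k.-1 (ltac:(lia)); exists b; have := gR b; lia.
  - move=> a; have [h1 h2] := pinv e a; rewrite re; split.
    + have := gR a; have := rngR a; lia.
    + case: (eqVneq a z) => [->|az]; first by have := gR z; lia.
      by have := Pz a az; lia.
apply: (@qf_move _ (Lp p) (Lp r) (@Lp_sym _ p) (@Lp_refl _ p) (@Lp_sym _ r) (@Lp_refl _ r) z w zw).
- move=> a b aw bw; case: (eqVneq a b) => [->|ab]; first by rewrite !Lp_refl.
  rewrite !(LpE _ e) !re; have := dP a b ab; have := dR a b ab.
  have := Rw a aw; have := Rw b bw; have := gR a; have := gR b.
  have := rngR a; have := rngR b; lia.
- rewrite (LpE _ e) !re; have := gR z; have := gR w; have := Pz w (ltac:(by rewrite eq_sym)).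
  lia.
- move=> b bw; case: (eqVneq b z) => [->|bz].
    rewrite Lp_refl !(LpE _ e) !re; have := gR z; have := gR w;
    have := Pz w (ltac:(by rewrite eq_sym)); lia.
  rewrite !(LpE _ e) !re; have := dP b z bz; have := dR b z bz.
  have := dP b w bw; have := dR b w bw.
  have := Rw b bw; have := gR b; have := gR z; have := gR w.
  have := rngR b; have := rngP b; have := Pz w (ltac:(by rewrite eq_sym)); have := Pz b bz.
  lia.
Qed.

Lemma left_step (A : finType) (p r : pairT A) e :
  inv p -> left_rauzy_move e p r -> inv r /\ qf_equiv (Qform p) (Qform r).
Proof.
move=> [pp pinv] [z [hz [re ro]]].
have [injP [rngP surP]] := pp e; have [injR [rngR surR]] := pp (~~ e).
have n1 : 1 <= #|A| by have := rngP z; lia.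
have [w hw] : exists w, p (~~ e) w = 1 by apply: surR; lia.
have zw : z != w.
  apply/eqP => ezw; rewrite -ezw in hw; have [h _] := pinv e z; exact: h.
have dP : forall b c, b != c -> p e b != p e c.
  by move=> b c; apply: contra => /eqP /injP ->.
have dR : forall b c, b != c -> p (~~ e) b != p (~~ e) c.
  by move=> b c; apply: contra => /eqP /injR ->.
have Pz : forall b, b != z -> 1 < p e b.
  by move=> b /dP; rewrite hz; have := rngP b; lia.
have Rw : forall b, b != w -> 1 < p (~~ e) b.
  by move=> b /dR; rewrite hw; have := rngR b; lia.
have Rz := Rw z zw.
have gR : forall b,
   (p (~~ e) b = 1 /\ r (~~ e) b = p (~~ e) z - 1) \/
   (1 < p (~~ e) b < p (~~ e) z /\ r (~~ e) b = p (~~ e) b - 1) \/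
   (p (~~ e) z <= p (~~ e) b /\ r (~~ e) b = p (~~ e) b).
  move=> b; rewrite ro; have := rngR b; case: ifP => h1; first by left; lia.
  by case: ifP => h2 hb; right; [left|right]; lia.
have rz := rngR z.
split.
  apply: (inv_build pp re).
  - move=> b c h; apply: injR; have := gR b; have := gR c; have := rngR b; have := rngR c; lia.
  - move=> b; have := gR b; have := rngR b; lia.
  - move=> k hk.
    case: (ltnP k.+1 (p (~~ e) z)) => h1.
      have [b hb] := surR k.+1 (ltac:(lia)); exists b; have := gR b; lia.
    case: (eqVneq k.+1 (p (~~ e) z)) => h2.
      by exists w; have := gR w; lia.
    have [b hb] := surR k (ltac:(lia)); exists b; have := gR b; lia.
  - move=> a; have [h1 h2] := pinv e a; rewrite re; split.
    + case: (eqVneq a z) => [->|az]; first by have := gR z; lia.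
      by have := Pz a az; lia.
    + have := gR a; have := rngR a; lia.
apply: (@qf_move _ (Lp p) (Lp r) (@Lp_sym _ p) (@Lp_refl _ p) (@Lp_sym _ r) (@Lp_refl _ r) z w zw).
- move=> a b aw bw; case: (eqVneq a b) => [->|ab]; first by rewrite !Lp_refl.
  rewrite !(LpE _ e) !re; have := dP a b ab; have := dR a b ab.
  have := Rw a aw; have := Rw b bw; have := gR a; have := gR b.
  have := rngR a; have := rngR b; lia.
- rewrite (LpE _ e) !re; have := gR z; have := gR w; have := Pz w (ltac:(by rewrite eq_sym)).
  lia.
- move=> b bw; case: (eqVneq b z) => [->|bz].
    rewrite Lp_refl !(LpE _ e) !re; have := gR z; have := gR w;
    have := Pz w (ltac:(by rewrite eq_sym)); lia.
  rewrite !(LpE _ e) !re; have := dP b z bz; have := dR b z bz.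
  have := dP b w bw; have := dR b w bw.
  have := Rw b bw; have := gR b; have := gR z; have := gR w.
  have := rngR b; have := rngP b; have := Pz w (ltac:(by rewrite eq_sym)); have := Pz b bz.
  lia.
Qed.

Lemma small_qf (A A' : finType) (p : pairT A) (q : pairT A') :
  #|A| <= 1 -> #|A'| = #|A| -> qf_equiv (Qform p) (Qform q).
Proof.
move=> h E.
pose phi (a : A) : A' := enum_val (cast_ord (esym E) (enum_rank a)).
pose psi (a : A') : A := enum_val (cast_ord E (enum_rank a)).
apply: (@qf_relabel _ _ p q phi psi).
- by move=> a; rewrite /phi /psi enum_valK cast_ordKV enum_rankK.
- by move=> a; rewrite /phi /psi enum_valK cast_ordK enum_rankK.
- move=> a b ab; exfalso; move/card_le1_eqP: h => h.
  by move: ab; rewrite (h a b) ?eqxx.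
Qed.

Lemma part1 (A : finType) (p : pairT A) :
  1 < #|A| -> is_pair p -> irreducible p ->
  forall q, in_labeled_class p q -> inv q /\ qf_equiv (Qform p) (Qform q).
Proof.
move=> n2 pp ir q; elim => [|q' r _ [iq qq] [e [m|m]]].
- by split; [exact: inv_init | exact: qf_refl].
- have [ir' qr] := rauzy_step iq m; split => //; exact: qf_trans qq qr.
- have [ir' qr] := left_step iq m; split => //; exact: qf_trans qq qr.
Qed.

Lemma perm_ofE (A : finType) (p : pairT A) a :
  is_pair p -> perm_of p (p false a) = p true a.
Proof.
move=> pp; have [pi _] := pp false; rewrite /perm_of.
case: pickP => [b /eqP /pi -> //|hn]; by have := hn a; rewrite eqxx.
Qed.

Theorem proposition2p17 (A : finType) (p : pairT A) :
  is_pair p -> irreducible p ->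
  (forall q : pairT A, in_labeled_class p q -> qf_equiv (Qform p) (Qform q)) /\
  (forall (A' : finType) (q : pairT A'), is_pair q ->
     in_nonlabeled_class p #|A'| (perm_of q) -> qf_equiv (Qform p) (Qform q)).
Proof.
move=> pp ir; case: (leqP #|A| 1) => n2.
  split; first by move=> q _; exact: small_qf.
  by move=> A' q _ [p' [_ [E _]]]; exact: small_qf.
split; first by move=> q cl; have [] := part1 n2 pp ir cl.
move=> A' q qp [p' [cl [E hperm]]].
have [[ip' _] qq] := part1 n2 pp ir cl.
apply: (qf_trans qq).
have [qi [qr qs]] := qp false; have [pi [pr ps]] := ip' false.
have [a0 _] := ps 1 (ltac:(lia)).
have [a0' _] := qs 1 (ltac:(lia)).
pose phi (a : A) : A' := odflt a0' [pick a' | q false a' == p' false a].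
pose psi (a' : A') : A := odflt a0 [pick a | p' false a == q false a'].
have hphi : forall a, q false (phi a) = p' false a.
  move=> a; rewrite /phi; case: pickP => [a' /eqP //|hn].
  have [a' ha'] := qs (p' false a) (ltac:(have := pr a; lia)).
  by have := hn a'; rewrite ha' eqxx.
have hpsi : forall a', p' false (psi a') = q false a'.
  move=> a'; rewrite /psi; case: pickP => [a /eqP //|hn].
  have [a ha] := ps (q false a') (ltac:(have := qr a'; lia)).
  by have := hn a; rewrite ha eqxx.
apply: (@qf_relabel _ _ p' q phi psi).
- by move=> a; apply: pi; rewrite hpsi hphi.
- by move=> a'; apply: qi; rewrite hphi hpsi.
- move=> a b _.
  have ht : forall c, q true (phi c) = p' true c.
    move=> c; rewrite -(perm_ofE _ qp) hphi -hperm ?(perm_ofE _ ip') //.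
    by have := pr c; lia.
  by rewrite !(LpE _ false) /= !hphi !ht.
Qed.
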